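(* Let $p$ be a prime and $f:\mathbb{Z}_p\times\mathbb{Z}_p\to\mathbb{Z}_p$. (i) If $f$ is additively separable, then the functional box $P^f$ is local. (ii) If $f$ is additively inseparable, then $P^f\leftrightarrow PR_p$, i.e. $P^f\to PR_p$ and $PR_p\to P^f$.
   Context: Let $p$ be a prime. All arithmetic on elements of $\mathbb{Z}_p$ is modulo $p$. A box is a conditional probability distribution $P(a,b\mid x,y)$ with $a,b,x,y\in\mathbb{Z}_p$. It is shared by Alice, who supplies $x$ and receives $a$, and Bob, who supplies $y$ and receives $b$. Different copies of a box act independently. For $j\in\mathbb{Z}_p$, the box $PR_{p,j}$ is defined by $PR_{p,j}(a,b\mid x,y)=1/p$ if $a-b=xy-j$, and $0$ otherwise. We write $PR_p:=PR_{p,0}$. For $f:\mathbb{Z}_p\times\mathbb{Z}_p\to\mathbb{Z}_p$, the functional box is defined by $P^f(a,b\mid x,y)=1/p$ if $a-b=f(x,y)$, and $0$ otherwise. A function $f$ is additively separable if there exist $g,h:\mathbb{Z}_p\to\mathbb{Z}_p$ with $f(x,y)=g(x)+h(y)$ for all $x,y$. Otherwise $f$ is additively inseparable. A box is local if Alice and Bob can reproduce its distribution exactly using only shared randomness and local processing, without communication. $P_1\to P_2$ means the following. For some $N\ge1$, Alice and Bob, using shared randomness, $N$ copies of $P_1$, and local processing but no communication, can exactly produce outputs distributed as $P_2(a,b\mid x,y)$ for every input pair $(x,y)$. Here each party's inputs to the boxes may depend on their own input, the shared randomness, and their own previously obtained box outputs. $P_1\leftrightarrow P_2$ means $P_1\to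 P_2$ and $P_2\to P_1$. *)

(* Defs.v *)
From HB Require Import structures.
From mathcomp Require Import all_boot all_order all_algebra.
Set Implicit Arguments. Unset Strict Implicit. Unset Printing Implicit Defensive.
Import Order.TTheory GRing.Theory Num.Theory.
Local Open Scope ring_scope.

(* A box: P a b x y = P(a,b | x,y), all of a,b,x,y in Z_p ('Z_p, used with p prime). *)
Definition box (R : realFieldType) (p : nat) := 'Z_p -> 'Z_p -> 'Z_p -> 'Z_p -> R.

Definition PRj (R : realFieldType) (p : nat) (j : 'Z_p) : box R p :=
  fun a b x y => if a - b == x * y - j then (p%:R)^-1 else 0.

Definition PR (R : realFieldType) (p : nat) : box R p := @PRj R p 0.

Definition Pfun (R : realFieldType) (p : nat) (f : 'Z_p -> 'Z_p -> 'Z_p) : box R p :=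
  fun a b x y => if a - b == f x y then (p%:R)^-1 else 0.

Definition additively_separable (p : nat) (f : 'Z_p -> 'Z_p -> 'Z_p) : Prop :=
  exists (g h : 'Z_p -> 'Z_p), forall x y, f x y = g x + h y.

(* Shared randomness: a finite probability distribution w on a finite type L
   (local randomness can be absorbed into it). *)
Definition is_distr (R : realFieldType) (L : finType) (w : L -> R) : Prop :=
  (forall l, 0 <= w l) /\ \sum_(l : L) w l = 1.

Definition local (R : realFieldType) (p : nat) (P : box R p) : Prop :=
  exists (L : finType) (w : L -> R) (fa : 'Z_p -> L -> 'Z_p) (fb : 'Z_p -> L -> 'Z_p),
    is_distr w /\
    forall a b x y,
      P a b x y = \sum_(l : L) w l * ((fa x l == a) && (fb y l == b))%:R.

(* A strategy for choosing the input to the k-th copy is causal if it depends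
   only on the outputs of copies 0..k-1 (plus own input and shared randomness). *)
Definition causal (p N : nat) (L : finType)
    (s : 'I_N -> 'Z_p -> L -> {ffun 'I_N -> 'Z_p} -> 'Z_p) : Prop :=
  forall (k : 'I_N) (x : 'Z_p) (l : L) (o o' : {ffun 'I_N -> 'Z_p}),
    (forall j : 'I_N, (j < k)%N -> o j = o' j) -> s k x l o = s k x l o'.

(* P1 -> P2: with N >= 1 copies of P1 (used in order 0..N-1 by each party),
   shared randomness and local processing, P2 is reproduced exactly. *)
Definition simulates (R : realFieldType) (p : nat) (P1 P2 : box R p) : Prop :=
  exists (N : nat) (L : finType) (w : L -> R)
         (xs : 'I_N -> 'Z_p -> L -> {ffun 'I_N -> 'Z_p} -> 'Z_p)
         (ys : 'I_N -> 'Z_p -> L -> {ffun 'I_N -> 'Z_p} -> 'Z_p)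
         (fa : 'Z_p -> L -> {ffun 'I_N -> 'Z_p} -> 'Z_p)
         (fb : 'Z_p -> L -> {ffun 'I_N -> 'Z_p} -> 'Z_p),
    (0 < N)%N /\ is_distr w /\ causal xs /\ causal ys /\
    forall a b x y,
      P2 a b x y =
      \sum_(l : L) w l *
        \sum_(oa : {ffun 'I_N -> 'Z_p}) \sum_(ob : {ffun 'I_N -> 'Z_p})
          ((fa x l oa == a) && (fb y l ob == b))%:R *
          \prod_(k : 'I_N) P1 (oa k) (ob k) (xs k x l oa) (ys k y l ob).

Definition equivalent (R : realFieldType) (p : nat) (P1 P2 : box R p) : Prop :=
  simulates P1 P2 /\ simulates P2 P1.

(* Main.v *)
Require Import Defs.
From HB Require Import structures.
From mathcomp Require Import all_boot all_order all_algebra ring.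
Set Implicit Arguments. Unset Strict Implicit. Unset Printing Implicit Defensive.
Import Order.TTheory GRing.Theory Num.Theory.
Local Open Scope ring_scope.

Lemma card_Zp_prime p : prime p -> #|'Z_p| = p.
Proof. by move=> hp; rewrite card_ord Zp_cast // prime_gt1. Qed.

Lemma p_neq0 (R : realFieldType) p : prime p -> (p%:R : R) != 0.
Proof. by move=> hp; rewrite pnatr_eq0 -lt0n prime_gt0. Qed.

Lemma prod_fun (R : realFieldType) p N (q : R) (F : 'I_N -> 'Z_p)
   (oa ob : {ffun 'I_N -> 'Z_p}) :
  \prod_(k : 'I_N) (if oa k - ob k == F k then q else 0) =
  (ob == [ffun k => oa k - F k])%:R * q ^+ N.
Proof.
case: eqP => [->|hne].
  rewrite mul1r -[in RHS](card_ord N) -prodr_const; apply: eq_bigr => k _.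
  by rewrite ffunE opprB addrC subrK eqxx.
rewrite mul0r; case: (pickP (fun k => ob k != [ffun k => oa k - F k] k)) => [k Hk|H].
  rewrite (bigD1 k) //= ifF ?mul0r //; apply/negbTE; apply: contra Hk.
  by move/eqP=> e; rewrite ffunE -e opprB addrC subrK.
by exfalso; apply: hne; apply/ffunP => k; move: (H k) => /= /negbFE /eqP.
Qed.

Lemma sim_fun (R : realFieldType) (p : nat) (hp : prime p) (P1 P2 : box R p)
  (F G : 'Z_p -> 'Z_p -> 'Z_p) (N : nat) (u v : 'I_N -> 'Z_p -> 'Z_p)
  (alpha : 'I_N -> 'Z_p) (cA cB : 'Z_p -> 'Z_p) :
  (0 < N)%N -> (forall a b x y, P1 a b x y = Pfun R F a b x y) ->
  (forall a b x y, P2 a b x y = Pfun R G a b x y) ->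
  (forall x y, \sum_k alpha k * F (u k x) (v k y) + cA x - cB y = G x y) ->
  simulates P1 P2.
Proof.
move=> hN H1 H2 HG.
set q : R := (p%:R)^-1.
exists N, 'Z_p, (fun _ => q), (fun k x _ _ => u k x), (fun k y _ _ => v k y),
  (fun x l oa => l + \sum_k alpha k * oa k + cA x),
  (fun y l ob => l + \sum_k alpha k * ob k + cB y).
split=> //; split.
  split=> [l|]; first by rewrite invr_ge0 ler0n.
  by rewrite sumr_const card_Zp_prime // -mulr_natr mulVf ?p_neq0.
split; first by []. split; first by [].
move=> a b x y; rewrite H2 /Pfun.
set T := \sum_k alpha k * F (u k x) (v k y).
have step1 : forall l (oa : {ffun 'I_N -> 'Z_p}),
  \sum_(ob : {ffun 'I_N -> 'Z_p})
     ((l + \sum_k alpha k * oa k + cA x == a) &&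
      (l + \sum_k alpha k * ob k + cB y == b))%:R *
     \prod_(k : 'I_N) P1 (oa k) (ob k) (u k x) (v k y) =
  ((l == a - \sum_k alpha k * oa k - cA x) && (a - b == G x y))%:R * q ^+ N.
  move=> l oa.
  under eq_bigr => ob _ do rewrite (eq_bigr _ (fun k _ => H1 _ _ _ _)) /Pfun prod_fun.
  rewrite (bigD1 [ffun k => oa k - F (u k x) (v k y)]) //= eqxx mul1r.
  rewrite [X in _ + X]big1 ?addr0; last first.
    by move=> ob /negbTE ->; rewrite mul0r mulr0.
  congr (GRing.natmul _ (nat_of_bool _) * _).
  have -> : \sum_k alpha k * [ffun k => oa k - F (u k x) (v k y)] k =
            \sum_k alpha k * oa k - T.
    by rewrite /T -sumrB; apply: eq_bigr => k _; rewrite ffunE mulrBr.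
  rewrite -(HG x y) -/T.
  move: (\sum_(k < N) alpha k * oa k) T => s t.
  apply/idP/idP.
    case/andP => /eqP e1 /eqP e2; apply/andP; split; apply/eqP; rewrite -?e1 -?e2; ring.
  case/andP => /eqP e1 /eqP e2; apply/andP; split; apply/eqP; rewrite ?e1.
    ring.
  have -> : b = a - (t + cA x - cB y) by rewrite -e2; ring.
  ring.
under eq_bigr => l _ do rewrite (eq_bigr _ (fun oa _ => step1 l oa)) mulr_sumr.
rewrite exchange_big /=.
have step2 : forall oa : {ffun 'I_N -> 'Z_p},
  \sum_(l : 'Z_p) q * (((l == a - \sum_k alpha k * oa k - cA x) && (a - b == G x y))%:R * q ^+ N)
  = q * ((a - b == G x y)%:R * q ^+ N).
  move=> oa; rewrite (bigD1 (a - \sum_k alpha k * oa k - cA x)) //= eqxx /= big1 ?addr0 //.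
  by move=> l /negbTE ->; rewrite mul0r mulr0.
rewrite (eq_bigr _ (fun oa _ => step2 oa)) sumr_const card_ffun !card_ord.
have -> : ((Zp_trunc p).+2 ^ N = p ^ N)%N by rewrite Zp_cast // prime_gt1.
case: eqP => _ /=; last by rewrite !mul0r mulr0 mul0rn.
rewrite (mul1r (q ^+ N)) -[in RHS]mulr_natr natrX -mulrA -exprMn /q mulVf ?expr1n ?mulr1 // p_neq0 //.
Qed.


Lemma part1 (R : realFieldType) (p : nat) (hp : prime p)
    (f : 'Z_p -> 'Z_p -> 'Z_p) : additively_separable f -> local (@Pfun R p f).
Proof.
case=> g [h Hf].
exists 'Z_p, (fun _ => (p%:R : R)^-1), (fun x l => g x + l), (fun y l => l - h y).
split.
  split=> [l|]; first by rewrite invr_ge0 ler0n.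
  by rewrite sumr_const card_Zp_prime // -(mulr_natr ((p%:R : R)^-1)) mulVf ?p_neq0.
move=> a b x y; rewrite /Pfun (bigD1 (a - g x)) //= big1 ?addr0; last first.
  move=> l hl; rewrite (_ : g x + l == a = false) ?mulr0 //.
  apply/negbTE; apply: contra hl => /eqP <-; apply/eqP; move: (g x) => s; ring.
have -> : g x + (a - g x) == a by apply/eqP; move: (g x) => s; ring.
have -> : (a - g x - h y == b) = (a - b == f x y).
  rewrite Hf; move: (g x) (h y) => s t; apply/eqP/eqP => e.
    by rewrite -e; ring.
  have -> : b = a - (s + t) by rewrite -e; ring.
  ring.
by case: ifP => _ /=; rewrite ?mulr1 ?mulr0.
Qed.

Lemma PR_fun (R : realFieldType) p a b x y :
  @PR R p a b x y = Pfun R (fun x y => x * y) a b x y.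
Proof. by rewrite /PR /PRj /Pfun subr0. Qed.

Lemma part2b (R : realFieldType) (p : nat) (hp : prime p)
    (f : 'Z_p -> 'Z_p -> 'Z_p) : simulates (@PR R p) (@Pfun R p f).
Proof.
apply: (@sim_fun R p hp _ _ (fun x y => x * y) f (Zp_trunc p).+2
   (fun k x => f x k) (fun k y => (y == k)%:R) (fun _ => 1) (fun _ => 0) (fun _ => 0)) => //.
  exact: PR_fun.
move=> x y; rewrite subr0 addr0 (bigD1 y) //= eqxx mul1r mulr1 big1 ?addr0 //.
by move=> k /negbTE hk; rewrite eq_sym hk mul1r mulr0.
Qed.

Lemma part2a (R : realFieldType) (p : nat) (hp : prime p)
    (f : 'Z_p -> 'Z_p -> 'Z_p) : ~ additively_separable f ->
    simulates (@Pfun R p f) (@PR R p).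
Proof.
move=> hns.
have [x1 [y1 hc]] : exists x1 y1, f 0 0 - f 0 y1 - f x1 0 + f x1 y1 != 0.
  case: (boolP [exists x1, exists y1, f 0 0 - f 0 y1 - f x1 0 + f x1 y1 != 0]).
    by case/existsP => x1 /existsP [y1 h]; exists x1, y1.
  move=> hn; exfalso; apply: hns; exists (fun x => f x 0), (fun y => f 0 y - f 0 0).
  move=> x y; move: hn; rewrite negb_exists => /forallP /(_ x).
  rewrite negb_exists => /forallP /(_ y) /negbNE /eqP e.
  move: (f 0 0) (f 0 y) (f x 0) (f x y) e => A B C D e.
  have -> : D = B + C - A by rewrite -[D]subr0 -e; ring.
  ring.
set c := f 0 0 - f 0 y1 - f x1 0 + f x1 y1.
have [d hd] : exists d, d * c = 1.
  have hu : c \is a GRing.unit.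
    rewrite -(natr_Zp c) unitZpE ?prime_gt1 // prime_coprime // gtnNdvd //.
      by rewrite lt0n; apply: contra hc => /eqP h; apply/eqP; apply: val_inj.
    by rewrite -{2}(Zp_cast (prime_gt1 hp)).
  by exists c^-1; rewrite mulVr.
pose I := ('Z_p * 'Z_p)%type.
pose e : 'I_#|{: I}| -> I := enum_val.
pose u := fun k x => if x == (e k).1 then x1 else 0.
pose v := fun k y => if y == (e k).2 then y1 else 0.
pose alpha := fun k => (e k).1 * (e k).2 * d.
apply: (@sim_fun R p hp _ _ f (fun x y => x * y) #|{: I}| u v alpha
   (fun x => - \sum_k alpha k * f (u k x) 0)
   (fun y => \sum_k alpha k * (f 0 (v k y) - f 0 0))) => //.
- by apply/card_gt0P; exists (0, 0).
- by move=> *; rewrite PR_fun.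
move=> x y.
have cross : forall k, alpha k * f (u k x) (v k y) =
   alpha k * f (u k x) 0 + alpha k * (f 0 (v k y) - f 0 0) +
   (e k).1 * (e k).2 * ((x == (e k).1) && (y == (e k).2))%:R.
  move=> k; rewrite /u /v /alpha.
  case: eqP => _; case: eqP => _ /=.
  - have key : forall (i j A B C D dd : 'Z_p),
       i*j*dd*D = i*j*dd*C + i*j*dd*(B-A) + i*j*(dd*(A - B - C + D)) by move=> *; ring.
    by rewrite (key _ _ (f 0 0) (f 0 y1) (f x1 0)) -/c hd.
  - rewrite mulr0; move: (f 0 0) (f x1 0) => A C; ring.
  - rewrite mulr0; move: (f 0 0) (f 0 y1) => A B; ring.
  - rewrite mulr0; move: (f 0 0) => A; ring.
rewrite (eq_bigr _ (fun k _ => cross k)) !big_split /=.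
rewrite -(big_enum_val (A := {: I}) (fun t => t.1 * t.2 * ((x == t.1) && (y == t.2))%:R)).
have hs : \sum_(t in {: I}) t.1 * t.2 * ((x == t.1) && (y == t.2))%:R = x * y.
  rewrite (bigD1 (x, y)) //= !eqxx big1 ?addr0 /= ?mulr1 //.
  case=> i j /= hij; rewrite (_ : (x == i) && (y == j) = false) ?mulr0 //.
  by apply/negbTE; apply: contra hij => /andP [/eqP -> /eqP ->].
rewrite hs.
move: (\sum_(k < #|{: I}|) alpha k * f (u k x) 0) (\sum_(k < #|{: I}|) alpha k * (f 0 (v k y) - f 0 0)) => S1 S2.
ring.
Qed.

Theorem lemma1 (R : realFieldType) (p : nat) (hp : prime p)
    (f : 'Z_p -> 'Z_p -> 'Z_p) :
  (additively_separable f -> local (@Pfun R p f)) /\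
  (~ additively_separable f -> simulates (@Pfun R p f) (@PR R p) /\ simulates (@PR R p) (@Pfun R p f)).
Proof.
split; first exact: part1.
by move=> h; split; [exact: part2a | exact: part2b].
Qed.
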